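(* Let $G$ be a finite simple undirected graph on $n\ge1$ vertices. Then every coalition game $\mathcal G$ over $G$ satisfies $\dfrac{\rho^f(\mathcal G)}{\rho(\mathcal G)}\le 2\sqrt n$.
   Context: Coalition game over $G=(V,E)$: a valuation $v:2^V\to\mathbb Z_{\ge0}$ with $v(\emptyset)=0$, $v(S)=0$ whenever $G[S]$ is disconnected, $v$ not identically zero. $\rho^f(\mathcal G)=\max\{\sum_S v(S)y_S: y\ge0,\ \sum_{S\ni i}y_S\le1\ \forall i\in V\}$, and $\rho(\mathcal G)$ is the same maximum over $0/1$ vectors $y$ (equivalently, the maximum of $\sum v(S)$ over families of pairwise disjoint subsets of $V$). *)

(* Defs.v *)
From HB Require Import structures.
From mathcomp Require Import all_boot all_order all_algebra.
Set Implicit Arguments. Unset Strict Implicit. Unset Printing Implicit Defensive.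
Import Order.TTheory GRing.Theory Num.Theory.
Local Open Scope ring_scope.

Definition induced_rel (V : finType) (e : rel V) (S : {set V}) : rel V :=
  [rel x y | [&& e x y, x \in S & y \in S]].

Definition induced_connected (V : finType) (e : rel V) (S : {set V}) : bool :=
  [forall x in S, forall y in S, connect (induced_rel e S) x y].

Definition rho (V : finType) (v : {set V} -> nat) : nat :=
  \max_(F : {set {set V}} | trivIset F) \sum_(S in F) v S.

Definition frac_value (R : numDomainType) (V : finType)
  (v : {set V} -> nat) (y : {set V} -> R) : R :=
  \sum_(S : {set V}) (v S)%:R * y S.

(* y is feasible for the fractional LP defining rho^f. *)
Definition frac_feasible (R : numDomainType) (V : finType) (y : {set V} -> R) : Prop :=
  (forall S, 0 <= y S) /\ (forall i : V, \sum_(S : {set V} | i \in S) y S <= 1).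

(* Main.v *)
Require Import Defs.
From HB Require Import structures.
From mathcomp Require Import all_boot all_order all_algebra.
From mathcomp Require Import zify ring.
Import Order.TTheory GRing.Theory Num.Theory.
Local Open Scope ring_scope.

Section Aux.
Variables (R : rcfType) (V : finType) (y : {set V} -> R).
Hypothesis hy : forall S, 0 <= y S.
Hypothesis hf : forall i : V, \sum_(S : {set V} | i \in S) y S <= 1.

Lemma cover_bound (A : {set V}) (W : pred {set V}) :
  (forall T, W T -> ~~ [disjoint T & A]) ->
  \sum_(T | W T) y T <= #|A|%:R.
Proof.
move=> hW.
apply: (@le_trans _ _ (\sum_(i in A) \sum_(T : {set V} | i \in T) y T)); last first.
  rewrite -sumr_const; apply: ler_sum => i _; exact: hf.
rewrite (exchange_big_dep predT) //= big_mkcond /=.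
apply: ler_sum => T _; case: ifP => WT; last by apply: sumr_ge0.
have := hW T WT; rewrite -setI_eq0 => /set0Pn [i]; rewrite inE => /andP [iT iA].
rewrite (bigD1 i) /=; last by rewrite iA iT.
by rewrite lerDl; apply: sumr_ge0.
Qed.

Lemma greedy (v : {set V} -> nat) (v0 : v set0 = 0%N) (c : R) (hc : 0 <= c) :
  forall N (W : {set {set V}}), (#|W| <= N)%N ->
  (forall S, S \in W -> #|S|%:R <= c) ->
  exists F : {set {set V}}, [/\ trivIset F, F \subset W &
    \sum_(S in W) (v S)%:R * y S <= c * (\sum_(S in F) v S)%:R].
Proof.
elim=> [|N IH] W.
  rewrite leqn0 => /eqP /cards0_eq -> _; exists set0; rewrite big_set0 sub0set; split => //.
    by apply/trivIsetP => A B; rewrite inE.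
  by rewrite big_set0 mulr0.
move=> hN hWc.
case: (set_0Vmem W) => [-> | [S0 S0W]].
  exists set0; rewrite big_set0 sub0set; split => //; first by apply/trivIsetP => A B; rewrite inE.
  by rewrite big_set0 mulr0.
case: (@arg_maxnP _ S0 (mem W) v S0W) => S SW0 Smax.
have SW : S \in W := SW0.
case: (set_0Vmem S) => [S0e | [x xS]].
  exists set0; rewrite sub0set; split => //; first by apply/trivIsetP => A B; rewrite inE.
  rewrite big_set0 mulr0 big1 // => T TW.
  have : (v T <= v S)%N := Smax T TW; rewrite S0e v0 leqn0 => /eqP ->; by rewrite mul0r.
set W' := [set T in W | [disjoint T & S]].
have SnW' : S \notin W'.
  rewrite inE negb_and; apply/orP; right; rewrite -setI_eq0; apply/set0Pn; exists x; by rewrite inE xS.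
have hW'N : (#|W'| <= N)%N.
  have : W' \subset W :\ S.
    apply/subsetP => T TW'; rewrite !inE.
    have : T != S by apply: contraNneq SnW' => <-.
    by move: TW'; rewrite inE => /andP [-> _] ->.
  move/subset_leq_card => h; have := cardsD1 S W; rewrite SW /= => e'.
  move: hN; rewrite e' add1n ltnS => hN; exact: leq_trans h hN.
have [F' [tiF' sF' hF']] := IH W' hW'N (fun T TW' => hWc T (elimT andP (etrans (esym (in_set _ T)) TW')).1).
have SnF' : S \notin F' by apply: contra SnW'; apply: (subsetP sF').
exists (S |: F'); split.
- apply/trivIsetP => A B /setU1P [-> | AF] /setU1P [-> | BF].
  + by rewrite eqxx.
  + move=> _; have := subsetP sF' B BF; rewrite inE => /andP [_]; by rewrite disjoint_sym.
  + move=> _; have := subsetP sF' A AF; by rewrite inE => /andP [_].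
  + by move/trivIsetP: tiF'; apply.
- apply/subsetP => T /setU1P [-> // | TF].
  by have := subsetP sF' T TF; rewrite inE => /andP [].
rewrite big_setU1 //= natrD mulrDr addrC.
rewrite (bigID [pred T : {set V} | [disjoint T & S]]) /=.
apply: lerD.
  apply: le_trans hF'; rewrite le_eqVlt; apply/orP; left; apply/eqP.
  by apply: eq_bigl => T; rewrite inE.
apply: (@le_trans _ _ (\sum_(T in W | ~~ [disjoint T & S]) (v S)%:R * y T)).
  apply: ler_sum => T /andP [TW _]; apply: ler_wpM2r => //.
  by rewrite ler_nat; apply: Smax.
rewrite -mulr_sumr mulrC ler_wpM2r //.
apply: le_trans (hWc S SW).
by apply: cover_bound => T /andP [].
Qed.

End Aux.

Theorem lemma5p4 (R : rcfType) (V : finType) (e : rel V)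
  (e_sym : symmetric e) (e_irr : irreflexive e) (n_pos : (0 < #|V|)%N)
  (v : {set V} -> nat)
  (v0 : v set0 = 0%N)
  (v_conn : forall S : {set V}, ~~ induced_connected e S -> v S = 0%N)
  (v_nz : exists S : {set V}, v S <> 0%N) :
  forall y : {set V} -> R, frac_feasible y ->
    frac_value v y <= 2 * Num.sqrt (#|V|%:R) * (rho v)%:R.
Proof.
move=> y [hy hf].
set sq := Num.sqrt (#|V|%:R : R).
set r := rho v.
have sq_gt0 : 0 < sq by rewrite sqrtr_gt0 ltr0n.
have sqsq : sq * sq = #|V|%:R by rewrite -expr2 sqr_sqrtr // ler0n.
have rho_ge : forall F : {set {set V}}, trivIset F -> (\sum_(S in F) v S <= r)%N.
  by move=> F tF; rewrite /r /rho; apply: (leq_bigmax_cond F tF).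
rewrite /frac_value (bigID [pred S : {set V} | #|S|%:R <= sq]) /=.
have small : \sum_(S : {set V} | #|S|%:R <= sq) (v S)%:R * y S <= sq * r%:R.
  set W := [set S : {set V} | #|S|%:R <= sq].
  have hWc : forall S, S \in W -> #|S|%:R <= sq by move=> S; rewrite inE.
  have [F [tF _ hF]] := @greedy R V y hy hf v v0 sq (ltW sq_gt0) _ W (leqnn _) hWc.
  apply: le_trans (_ : sq * (\sum_(S in F) v S)%:R <= _); last first.
    by rewrite ler_wpM2l ?(ltW sq_gt0) // ler_nat; apply: rho_ge.
  apply: le_trans hF; rewrite le_eqVlt; apply/orP; left; apply/eqP.
  by apply: eq_bigl => S; rewrite inE.
have large : \sum_(S : {set V} | ~~ (#|S|%:R <= sq)) (v S)%:R * y S <= sq * r%:R.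
  apply: (@le_trans _ _ (\sum_(S : {set V} | ~~ (#|S|%:R <= sq)) r%:R * y S)).
    apply: ler_sum => S _; rewrite ler_wpM2r // ler_nat.
    by have := rho_ge [set S] (trivIset1 S); rewrite big_set1.
  rewrite -mulr_sumr mulrC ler_wpM2r ?ler0n //.
  rewrite -(ler_pM2l sq_gt0) sqsq mulr_sumr.
  apply: (@le_trans _ _ (\sum_(S : {set V} | ~~ (#|S|%:R <= sq)) #|S|%:R * y S)).
    apply: ler_sum => S; rewrite -ltNge => hS; rewrite ler_wpM2r //; exact: ltW.
  apply: (@le_trans _ _ (\sum_(S : {set V}) #|S|%:R * y S)).
    rewrite [X in _ <= X](bigID [pred S : {set V} | ~~ (#|S|%:R <= sq)]) /= lerDl.
    by apply: sumr_ge0 => S _; rewrite mulr_ge0 ?ler0n.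
  have -> : \sum_(S : {set V}) #|S|%:R * y S = \sum_(i : V) \sum_(S : {set V} | i \in S) y S.
    rewrite (exchange_big_dep predT) //=; apply: eq_bigr => S _.
    by rewrite (eq_bigl (fun i => i \in S)) // sumr_const mulr_natl.
  apply: (@le_trans _ _ (\sum_(i : V) (1 : R))); first by apply: ler_sum => i _; apply: hf.
  by rewrite sumr_const.
have -> : 2 * sq * r%:R = sq * r%:R + sq * r%:R by ring.
exact: lerD.
Qed.
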